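(* Let $(S(t),E(t),I(t),R(t))$ be a solution of the SEIR initial value problem described in the context such that $S(t)>0$, $E(t)>0$ and $I(t)>0$ for $t>0$. Then the limit $R(\infty)=\lim_{t\to\infty}R(t)$ exists, and, writing $a:=e^{-(\beta/\gamma)R(\infty)}$ and $u_0:=e^{-(\beta/\gamma)\tilde R}$, there is a function $\psi$, continuous and positive on $(a,u_0]$ and $C^1$ on $(a,u_0)$, satisfying the Abel differential equation of the second kind \[ \psi'\psi-\frac{\gamma+\delta}{u}\psi=-\delta\,\frac{\beta N-\beta\tilde S e^{(\beta/\gamma)\tilde R}u+\gamma\log u}{u},\qquad u\in(a,u_0), \] together with $\psi(u_0)=\beta\tilde I$ and $\lim_{u\to a+0}\psi(u)=0$, such that, with \[ t=\varphi(u)=\int_u^{u_0}\frac{d\xi}{\xi\psi(\xi)}, \] the solution has the parametric representation, for $a<u\le u_0$, \[ S(\varphi(u))=\tilde S e^{(\beta/\gamma)\tilde R}u,\qquad E(\varphi(u))=\tilde E e^{-\delta\varphi(u)}+\tilde S e^{(\beta/\gamma)\tilde R}e^{-\delta\varphi(u)}\int_u^{u_0}e^{\delta\varphi(v)}dv, \] \[ I(\varphi(u))=N-\tilde S e^{(\beta/\gamma)\tilde R}u+\frac{\gamma}{\beta}\log u-\tilde E e^{-\delta\varphi(u)}-\tilde S e^{(\beta/\gamma)\tilde R}e^{-\delta\varphi(u)}\int_u^{u_0}e^{\delta\varphi(v)}dv,\qquad R(\varphi(u))=-\frac{\gamma}{\beta}\log u . \]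
   Context: Let $\beta,\gamma,\delta>0$ be constants and $\tilde S,\tilde E,\tilde I,\tilde R$ real numbers with $N:=\tilde S+\tilde E+\tilde I+\tilde R>0$. The SEIR initial value problem is $S'(t)=-\beta S(t)I(t)$, $E'(t)=\beta S(t)I(t)-\delta E(t)$, $I'(t)=\delta E(t)-\gamma I(t)$, $R'(t)=\gamma I(t)$ for $t>0$, with $S(0)=\tilde S$, $E(0)=\tilde E$, $I(0)=\tilde I$, $R(0)=\tilde R$; a solution is a vector function $(S,E,I,R)$ of class $C^1(0,\infty)\cap C[0,\infty)$ satisfying these. Standing assumptions: (A1) $\tilde I>0$; (A2) $\tilde E>(\gamma/\delta)\tilde I$; (A3) $\tilde S>\delta\tilde E/(\beta\tilde I)$; (A4) $\tilde R\ge 0$ and $N>\tilde S e^{(\beta/\gamma)\tilde R}+\tilde R$. *)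

(* Defs.v *)
From Stdlib Require Import Reals.
From Coquelicot Require Import Coquelicot.
Open Scope R_scope.

(* A solution of the SEIR initial value problem: class C^1(0,oo) /\ C[0,oo),
   satisfying the ODEs for t > 0 and the initial conditions at t = 0.
   Functions are defined on all of R; only their values on [0,oo) matter.
   Continuity on [0,oo) at the endpoint 0 is right-continuity. *)
Definition SEIR_solution (beta gamma delta S0 E0 I0 R0 : R)
  (S E I Rc : R -> R) : Prop :=
  S 0 = S0 /\ E 0 = E0 /\ I 0 = I0 /\ Rc 0 = R0 /\
  filterlim S (at_right 0) (locally (S 0)) /\
  filterlim E (at_right 0) (locally (E 0)) /\
  filterlim I (at_right 0) (locally (I 0)) /\
  filterlim Rc (at_right 0) (locally (Rc 0)) /\
  (forall t, 0 < t -> is_derive S t (- beta * S t * I t)) /\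
  (forall t, 0 < t -> is_derive E t (beta * S t * I t - delta * E t)) /\
  (forall t, 0 < t -> is_derive I t (delta * E t - gamma * I t)) /\
  (forall t, 0 < t -> is_derive Rc t (gamma * I t)) /\
  (forall t, 0 < t ->
     continuous (Derive S) t /\ continuous (Derive E) t /\
     continuous (Derive I) t /\ continuous (Derive Rc) t).

Definition seir_phi (psi : R -> R) (u0 u : R) : R :=
  RInt (fun xi => / (xi * psi xi)) u u0.

(* Main.v *)
Require Import Defs.
From Stdlib Require Import Reals Lra ClassicalEpsilon Classical_Prop.
From Coquelicot Require Import Coquelicot.
Open Scope R_scope.

Definition cont_ed (f : R -> R) (x : R) : Prop :=
  forall eps, 0 < eps -> exists d, 0 < d /\
    forall y, Rabs (y - x) < d -> Rabs (f y - f x) < eps.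

Lemma cont_ed_pt f x : cont_ed f x -> continuity_pt f x.
Proof.
  intros H eps Heps. destruct (H eps Heps) as [d [Hd Hy]].
  exists d; split; [lra|]. intros y [_ Hy']. simpl in *. unfold R_dist in *.
  now apply Hy.
Qed.

Lemma pt_cont_ed f x : continuity_pt f x -> cont_ed f x.
Proof.
  intros H eps Heps. destruct (H eps Heps) as [d [Hd Hy]].
  exists d; split; [lra|]. intros y Hyx.
  destruct (Req_dec y x) as [->|Hne].
  - rewrite Rminus_diag, Rabs_R0; lra.
  - apply (Hy y). split; [split; [exact I| auto] | exact Hyx].
Qed.

Lemma pt_continuous f x : continuity_pt f x -> continuous f x.
Proof. intros H. now apply continuity_pt_filterlim. Qed.

Lemma continuous_pt f x : continuous f x -> continuity_pt f x.
Proof. intros H. now apply continuity_pt_filterlim. Qed.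

Lemma deriv_pt f x l : is_derive f x l -> continuity_pt f x.
Proof.
  intros H. apply derivable_continuous_pt. exists l. now apply is_derive_Reals.
Qed.

Lemma ball_R (x e y : R) : ball x e y <-> Rabs (y - x) < e.
Proof. reflexivity. Qed.

Lemma rc_max f : filterlim f (at_right 0) (locally (f 0)) ->
  continuity_pt (fun x => f (Rmax 0 x)) 0.
Proof.
  intros H. apply cont_ed_pt. intros eps Heps.
  apply filterlim_locally with (eps := mkposreal eps Heps) in H.
  destruct H as [d Hd]. exists d. split; [apply cond_pos|].
  intros y Hy. rewrite Rmax_left with (x:=0) (y:=0) by lra.
  unfold Rmax; destruct (Rle_dec 0 y).
  - destruct (Req_dec y 0) as [->|Hne].
    + rewrite Rminus_diag, Rabs_R0; lra.
    + apply (Hd y). apply ball_R. exact Hy. lra.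
  - rewrite Rminus_diag, Rabs_R0; lra.
Qed.

Lemma max_rc f : continuity_pt (fun x => f (Rmax 0 x)) 0 ->
  forall eps, 0 < eps -> exists d, 0 < d /\ forall y, 0 <= y < d -> Rabs (f y - f 0) < eps.
Proof.
  intros H eps Heps. apply pt_cont_ed in H. destruct (H eps Heps) as [d [Hd Hy]].
  exists d; split; auto. intros y [Hy0 Hyd].
  specialize (Hy y). rewrite Rmax_right in Hy by lra.
  rewrite Rmax_left in Hy by lra. apply Hy. rewrite Rminus_0_r, Rabs_pos_eq; lra.
Qed.

Lemma const_lemma G : continuity_pt (fun x => G (Rmax 0 x)) 0 ->
  (forall t, 0 < t -> is_derive G t 0) -> forall t, 0 <= t -> G t = G 0.
Proof.
  intros Hc HD.
  assert (Hpos : forall s t, 0 < s -> s <= t -> G t = G s).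
  { intros s t Hs Hst.
    destruct (MVT_gen G s t (fun _ => 0)) as [c [_ Hc']].
    - intros x Hx. apply HD. rewrite Rmin_left in Hx by lra. lra.
    - intros x Hx. apply (deriv_pt G x 0). apply HD.
      rewrite Rmin_left in Hx by lra. lra.
    - lra. }
  intros t Ht. destruct (Req_dec t 0) as [->|Hne]; auto.
  destruct (Req_dec (G t) (G 0)) as [E|Hne2]; auto. exfalso.
  assert (He : 0 < Rabs (G t - G 0)) by (apply Rabs_pos_lt; lra).
  destruct (max_rc G Hc _ He) as [d [Hd Hy]].
  set (y := Rmin t d / 2).
  assert (Hy0 : 0 < y) by (unfold y; apply Rmin_case; lra).
  assert (Hy1 : y <= t) by (unfold y; generalize (Rmin_l t d); lra).
  assert (Hy2 : y < d) by (unfold y; generalize (Rmin_r t d); generalize (Rmin_l t d); intros; lra).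
  specialize (Hy y (conj (Rlt_le _ _ Hy0) Hy2)).
  rewrite <- (Hpos y t Hy0 Hy1) in Hy. lra.
Qed.

Lemma deriv_val (f : R -> R) (x l l' : R) : is_derive f x l -> l = l' -> is_derive f x l'.
Proof. intros H ->; exact H. Qed.
Lemma dplus (f g : R -> R) (x df dg : R) : is_derive f x df -> is_derive g x dg ->
  is_derive (fun y => f y + g y) x (df + dg).
Proof. intros H1 H2. exact (is_derive_plus f g x df dg H1 H2). Qed.
Lemma dminus (f g : R -> R) (x df dg : R) : is_derive f x df -> is_derive g x dg ->
  is_derive (fun y => f y - g y) x (df - dg).
Proof. intros H1 H2. exact (is_derive_minus f g x df dg H1 H2). Qed.
Lemma dmult (f g : R -> R) (x df dg : R) : is_derive f x df -> is_derive g x dg ->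
  is_derive (fun y => f y * g y) x (df * g x + f x * dg).
Proof. intros H1 H2. exact (is_derive_mult f g x df dg H1 H2 Rmult_comm). Qed.
Lemma dcomp (f g : R -> R) (x df dg : R) : is_derive f (g x) df -> is_derive g x dg ->
  is_derive (fun y => f (g y)) x (dg * df).
Proof. intros H1 H2. exact (is_derive_comp f g x df dg H1 H2). Qed.
Lemma dexp (f : R -> R) (x df : R) : is_derive f x df -> is_derive (fun y => exp (f y)) x (df * exp (f x)).
Proof. intros H. apply (dcomp exp f x). apply is_derive_exp. exact H. Qed.
Lemma dscal (f : R -> R) (x k df : R) : is_derive f x df -> is_derive (fun y => k * f y) x (k * df).
Proof. apply is_derive_scal. Qed.
Lemma dconst (a x : R) : @is_derive R_AbsRing R_NormedModule (fun _ : R => a) x 0.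
Proof. exact (is_derive_const a x). Qed.
Lemma did (x : R) : @is_derive R_AbsRing R_NormedModule (fun y : R => y) x 1.
Proof. exact (is_derive_id x). Qed.

Lemma Rmax_cont : continuity_pt (fun x => Rmax 0 x) 0.
Proof.
  apply cont_ed_pt. intros eps He. exists eps. split; auto. intros y Hy.
  rewrite (Rmax_left 0 0) by lra. unfold Rmax; destruct (Rle_dec 0 y).
  - exact Hy.
  - rewrite Rminus_diag, Rabs_R0; lra.
Qed.

Section SEIR.
Variables beta gamma delta S0 E0 I0 R0 : R.
Variables S E I Rc : R -> R.
Hypothesis Hbeta : 0 < beta.
Hypothesis Hgamma : 0 < gamma.
Hypothesis Hdelta : 0 < delta.
Hypothesis A1 : 0 < I0.
Hypothesis HS0 : S 0 = S0.
Hypothesis HE0 : E 0 = E0.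
Hypothesis HI0 : I 0 = I0.
Hypothesis HR0 : Rc 0 = R0.
Hypothesis cS : filterlim S (at_right 0) (locally (S 0)).
Hypothesis cE : filterlim E (at_right 0) (locally (E 0)).
Hypothesis cI : filterlim I (at_right 0) (locally (I 0)).
Hypothesis cR : filterlim Rc (at_right 0) (locally (Rc 0)).
Hypothesis dS : forall t, 0 < t -> is_derive S t (- beta * S t * I t).
Hypothesis dE : forall t, 0 < t -> is_derive E t (beta * S t * I t - delta * E t).
Hypothesis dI : forall t, 0 < t -> is_derive I t (delta * E t - gamma * I t).
Hypothesis dR : forall t, 0 < t -> is_derive Rc t (gamma * I t).
Hypothesis Hpos : forall t, 0 < t -> 0 < S t /\ 0 < E t /\ 0 < I t.

Let N := S0 + E0 + I0 + R0.
Let c := beta / gamma.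
Let K := S0 * exp (c * R0).
Definition U t := exp (- c * Rc t).
Let u0 := exp (- c * R0).

Lemma cpS : continuity_pt (fun x => S (Rmax 0 x)) 0. Proof. now apply rc_max. Qed.
Lemma cpE : continuity_pt (fun x => E (Rmax 0 x)) 0. Proof. now apply rc_max. Qed.
Lemma cpI : continuity_pt (fun x => I (Rmax 0 x)) 0. Proof. now apply rc_max. Qed.
Lemma cpR : continuity_pt (fun x => Rc (Rmax 0 x)) 0. Proof. now apply rc_max. Qed.

Lemma conservation t : 0 <= t -> S t + E t + I t + Rc t = N.
Proof.
  intros Ht.
  rewrite (const_lemma (fun t => S t + E t + I t + Rc t)); auto.
  - unfold N; rewrite HS0, HE0, HI0, HR0; ring.
  - apply continuity_pt_plus; [apply continuity_pt_plus; [apply continuity_pt_plus|]|].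
    apply cpS. apply cpE. apply cpI. apply cpR.
  - intros s Hs. eapply deriv_val.
    + apply dplus; [apply dplus; [apply dplus|]|]; auto.
    + ring.
Qed.

Lemma SU t : 0 <= t -> S t = K * U t.
Proof.
  intros Ht.
  assert (H : S t * exp (c * Rc t) = K).
  { rewrite (const_lemma (fun t => S t * exp (c * Rc t))); auto.
    - unfold K; rewrite HS0, HR0; ring.
    - apply (continuity_pt_mult (fun x => S (Rmax 0 x)) (fun x => exp (c * Rc (Rmax 0 x)))).
      apply cpS.
      apply (continuity_pt_comp (fun x => c * Rc (Rmax 0 x)) exp).
      apply (continuity_pt_scal (fun x => Rc (Rmax 0 x))). apply cpR.
      apply derivable_continuous_pt, derivable_pt_exp.
    - intros s Hs. eapply deriv_val.
      + apply dmult; auto. apply dexp. apply dscal. auto.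
      + unfold c; field. lra. }
  unfold U. rewrite <- H. rewrite Rmult_assoc, <- exp_plus.
  replace (c * Rc t + - c * Rc t) with 0 by ring. rewrite exp_0; ring.
Qed.

Lemma c_pos : 0 < c.
Proof. unfold c. apply Rdiv_lt_0_compat; auto. Qed.

Lemma Ipos0 t : 0 <= t -> 0 < I t.
Proof.
  intros Ht. destruct (Req_dec t 0) as [->|Hn]. rewrite HI0; auto.
  apply Hpos; lra.
Qed.

Lemma R_incr_pos s t : 0 < s -> s < t -> Rc s < Rc t.
Proof.
  intros Hs Hst.
  destruct (MVT_gen Rc s t (fun x => gamma * I x)) as [x [Hx Hm]].
  - intros x Hx. rewrite Rmin_left, Rmax_right in Hx by lra. apply dR; lra.
  - intros x Hx. rewrite Rmin_left, Rmax_right in Hx by lra.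
    apply (deriv_pt _ _ _ (dR x ltac:(lra))).
  - rewrite Rmin_left, Rmax_right in Hx by lra.
    assert (0 < I x) by (apply Hpos; lra).
    assert (0 < gamma * I x * (t - s)) by (apply Rmult_lt_0_compat; [apply Rmult_lt_0_compat|]; lra).
    lra.
Qed.

Lemma R0_le s : 0 < s -> Rc 0 <= Rc s.
Proof.
  intros Hs. destruct (Rle_dec (Rc 0) (Rc s)) as [H|H]; auto. exfalso.
  assert (He : 0 < Rc 0 - Rc s) by lra.
  destruct (max_rc Rc cpR _ He) as [d [Hd Hy]].
  set (y := Rmin s d / 2).
  assert (Hy0 : 0 < y) by (unfold y; apply Rmin_case; lra).
  assert (Hy1 : y < s) by (unfold y; generalize (Rmin_l s d); lra).
  assert (Hy2 : y < d) by (unfold y; generalize (Rmin_r s d); generalize (Rmin_l s d); intros; lra).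
  specialize (Hy y (conj (Rlt_le _ _ Hy0) Hy2)).
  generalize (R_incr_pos y s Hy0 Hy1). intros. apply Rabs_def2 in Hy. lra.
Qed.

Lemma R_incr s t : 0 <= s -> s < t -> Rc s < Rc t.
Proof.
  intros Hs Hst. destruct (Req_dec s 0) as [->|Hn].
  - generalize (R0_le (t/2) ltac:(lra)) (R_incr_pos (t/2) t ltac:(lra) ltac:(lra)). lra.
  - apply R_incr_pos; lra.
Qed.

Lemma R_ge_R0 t : 0 <= t -> R0 <= Rc t.
Proof.
  intros Ht. rewrite <- HR0. destruct (Req_dec t 0) as [->|Hn]. lra.
  apply Rlt_le, R_incr; lra.
Qed.

Lemma R_lt_N t : 0 <= t -> Rc t < N.
Proof.
  intros Ht.
  assert (H1 : forall s, 0 < s -> Rc s < N).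
  { intros s Hs. rewrite <- (conservation s) by lra.
    destruct (Hpos s Hs) as [? [? ?]]. lra. }
  destruct (Req_dec t 0) as [->|Hn]. generalize (R_incr 0 1 ltac:(lra) ltac:(lra)) (H1 1 ltac:(lra)). lra.
  apply H1; lra.
Qed.

Definition Rset (y : R) : Prop := exists t, 0 <= t /\ y = Rc t.

Lemma Rset_bound : bound Rset.
Proof. exists N. intros y [t [Ht ->]]. apply Rlt_le, R_lt_N; auto. Qed.

Lemma Rset_ne : exists y, Rset y.
Proof. exists (Rc 0). exists 0. split; auto; lra. Qed.

Definition Rinf : R := proj1_sig (completeness Rset Rset_bound Rset_ne).

Lemma Rinf_lub : is_lub Rset Rinf.
Proof. unfold Rinf. destruct (completeness Rset Rset_bound Rset_ne); auto. Qed.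

Lemma R_lt_Rinf t : 0 <= t -> Rc t < Rinf.
Proof.
  intros Ht. destruct Rinf_lub as [Hub _].
  assert (Rc (t+1) <= Rinf) by (apply Hub; exists (t+1); split; auto; lra).
  generalize (R_incr t (t+1) Ht ltac:(lra)). lra.
Qed.

Lemma Rinf_le_N : Rinf <= N.
Proof.
  destruct Rinf_lub as [_ Hl]. apply Hl. intros y [t [Ht ->]]. apply Rlt_le, R_lt_N; auto.
Qed.

Lemma Rinf_approx eps : 0 < eps -> exists T, 0 <= T /\ Rinf - eps < Rc T.
Proof.
  intros He. destruct Rinf_lub as [_ Hl].
  destruct (Classical_Prop.classic (exists T, 0 <= T /\ Rinf - eps < Rc T)) as [H|H]; auto.
  exfalso. assert (Rinf <= Rinf - eps); [|lra].
  apply Hl. intros y [t [Ht ->]].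
  destruct (Rle_dec (Rc t) (Rinf - eps)) as [H'|H']; auto.
  exfalso; apply H; exists t; split; auto; lra.
Qed.

Lemma R_lim : is_lim Rc p_infty Rinf.
Proof.
  apply is_lim_spec. intros eps.
  destruct (Rinf_approx eps (cond_pos eps)) as [T [HT HR]].
  exists T. intros x Hx.
  generalize (R_incr T x HT Hx) (R_lt_Rinf x ltac:(lra)). intros.
  rewrite Rabs_left1 by lra. lra.
Qed.

Let a := exp (- c * Rinf).

Lemma U0 : U 0 = u0.
Proof. unfold U, u0; now rewrite HR0. Qed.

Lemma U_decr s t : 0 <= s -> s < t -> U t < U s.
Proof.
  intros Hs Hst. unfold U. apply exp_increasing.
  generalize (R_incr s t Hs Hst) c_pos. intros. nra.
Qed.

Lemma U_gt_a t : 0 <= t -> a < U t.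
Proof.
  intros Ht. unfold a, U. apply exp_increasing.
  generalize (R_lt_Rinf t Ht) c_pos. intros. nra.
Qed.

Lemma U_le_u0 t : 0 <= t -> U t <= u0.
Proof.
  intros Ht. rewrite <- U0. destruct (Req_dec t 0) as [->|Hn]. lra.
  apply Rlt_le, U_decr; lra.
Qed.

Lemma U_pos t : 0 < U t.
Proof. apply exp_pos. Qed.

Lemma dU t : 0 < t -> is_derive U t (- beta * I t * U t).
Proof.
  intros Ht. unfold U. eapply deriv_val.
  apply dexp. apply dscal. apply dR; auto.
  unfold c. field. lra.
Qed.

Lemma cpU : continuity_pt (fun x => U (Rmax 0 x)) 0.
Proof.
  unfold U.
  apply (continuity_pt_comp (fun x => - c * Rc (Rmax 0 x)) exp).
  apply (continuity_pt_scal (fun x => Rc (Rmax 0 x))). apply cpR.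
  apply derivable_continuous_pt, derivable_pt_exp.
Qed.

Lemma contU t : 0 < t -> continuity_pt U t.
Proof. intros Ht. apply (deriv_pt _ _ _ (dU t Ht)). Qed.

Let B := N - R0.
Let L := (delta + gamma) * B + 1.

Lemma B_pos : 0 < B.
Proof. unfold B. generalize (R_lt_N 1 ltac:(lra)) (R_ge_R0 1 ltac:(lra)). lra. Qed.

Lemma L_pos : 0 < L.
Proof. unfold L. generalize B_pos. intros. nra. Qed.

Lemma dI_bound t : 0 < t -> Rabs (delta * E t - gamma * I t) <= L.
Proof.
  intros Ht. destruct (Hpos t Ht) as [H1 [H2 H3]].
  generalize (conservation t ltac:(lra)) (R_ge_R0 t ltac:(lra)). intros Hc Hr.
  assert (E t < B) by (unfold B; lra). assert (I t < B) by (unfold B; lra).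
  unfold L. apply Rabs_le. split; nra.
Qed.

Lemma I_lim eps : 0 < eps -> exists T, 0 < T /\ forall t, T <= t -> I t < eps.
Proof.
  intros He. generalize L_pos; intros HL.
  set (h := eps / (2 * L)).
  assert (Hh : 0 < h) by (unfold h; apply Rdiv_lt_0_compat; lra).
  assert (HLh : L * h = eps / 2) by (unfold h; field; lra).
  assert (Hq : 0 < gamma * eps * h / 2) by (apply Rmult_lt_0_compat; [|lra]; apply Rmult_lt_0_compat; [apply Rmult_lt_0_compat|]; lra).
  destruct (Rinf_approx _ Hq) as [T0 [HT0 HR]].
  exists (T0 + h + 1). split; [lra|]. intros t Ht.
  destruct (Rlt_dec (I t) eps) as [Hlt|Hge]; auto. exfalso.
  destruct (MVT_gen Rc (t - h) t (fun x => gamma * I x)) as [x [Hx Hm]].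
  - intros x Hx. rewrite Rmin_left, Rmax_right in Hx by lra. apply dR; lra.
  - intros x Hx. rewrite Rmin_left, Rmax_right in Hx by lra.
    apply (deriv_pt _ _ _ (dR x ltac:(lra))).
  - rewrite Rmin_left, Rmax_right in Hx by lra.
    destruct (MVT_gen I x t (fun y => delta * E y - gamma * I y)) as [y [Hy Hm2]].
    + intros z Hz. rewrite Rmin_left, Rmax_right in Hz by lra. apply dI; lra.
    + intros z Hz. rewrite Rmin_left, Rmax_right in Hz by lra.
      apply (deriv_pt _ _ _ (dI z ltac:(lra))).
    + rewrite Rmin_left, Rmax_right in Hy by lra.
      generalize (dI_bound y ltac:(lra)). intros Hb. apply Rabs_le_between in Hb.
      assert (Hix : I t - I x <= L * h).
      { rewrite Hm2. assert (0 <= t - x) by lra. assert (t - x <= h) by lra. nra. }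
      assert (Ix : eps / 2 <= I x) by lra.
      assert (gamma * (eps/2) * h <= gamma * I x * (t - (t - h))).
      { replace (t - (t - h)) with h by ring. apply Rmult_le_compat_r; [lra|].
        apply Rmult_le_compat_l; lra. }
      generalize (R_lt_Rinf t ltac:(lra)) (R_incr T0 (t - h) HT0 ltac:(lra)). intros. lra.
Qed.

Lemma a_pos : 0 < a.
Proof. apply exp_pos. Qed.

Lemma a_lt_u0 : a < u0.
Proof. rewrite <- U0. apply U_gt_a; lra. Qed.

Lemma U_surj u : a < u <= u0 -> exists t, 0 <= t /\ U t = u.
Proof.
  intros [Hau Huu0]. destruct (Req_dec u u0) as [->|Hne].
  { exists 0. split; [lra|apply U0]. }
  assert (Hu : u < u0) by lra.
  assert (Hupos : 0 < u) by (generalize a_pos; lra).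
  assert (Hlnu : - c * Rinf < ln u).
  { rewrite <- (ln_exp (- c * Rinf)). apply ln_increasing; auto. apply exp_pos. }
  generalize c_pos; intros Hc.
  assert (He : 0 < Rinf + ln u / c).
  { apply Rmult_lt_reg_r with c; auto. rewrite Rmult_0_l, Rmult_plus_distr_r.
    replace (ln u / c * c) with (ln u) by (field; lra). lra. }
  destruct (Rinf_approx _ He) as [T [HT HRT]].
  assert (HUT : U T < u).
  { unfold U. rewrite <- (exp_ln u Hupos). apply exp_increasing.
    assert (- ln u / c < Rc T) by (unfold Rdiv in *; lra).
    apply Rmult_lt_compat_l with (r := c) in H; auto.
    replace (c * (- ln u / c)) with (- ln u) in H by (field; lra). lra. }
  assert (He2 : 0 < u0 - u) by lra.
  destruct (max_rc U cpU _ He2) as [d [Hd Hy]].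
  specialize (Hy (d/2) ltac:(lra)). rewrite U0 in Hy. apply Rabs_def2 in Hy.
  assert (Hs : d / 2 < T).
  { destruct (Rlt_le_dec (d/2) T) as [H|H]; auto. exfalso.
    destruct (Req_dec (d/2) T) as [Heq|Hneq]. rewrite Heq in Hy. lra.
    generalize (U_decr T (d/2) HT ltac:(lra)). lra. }
  destruct (Ranalysis5.IVT_interv (fun x => u - U x) (d/2) T) as [z [Hz Hfz]].
  - intros x Hx. apply (continuity_pt_minus (fun _ => u) U).
    apply continuity_pt_const. intros ? ?; reflexivity. apply contU; lra.
  - exact Hs.
  - simpl. lra.
  - simpl. lra.
  - exists z. split; [lra|]. simpl in Hfz. lra.
Qed.

Definition tau (u : R) : R :=
  if Rle_dec u u0 then ClassicalEpsilon.epsilon (inhabits 0) (fun t => 0 <= t /\ U t = u) else 0.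

Lemma tau_spec u : a < u <= u0 -> 0 <= tau u /\ U (tau u) = u.
Proof.
  intros Hu. unfold tau. destruct (Rle_dec u u0) as [H|H]; [|lra].
  apply (ClassicalEpsilon.epsilon_spec (inhabits 0) (fun t => 0 <= t /\ U t = u)).
  now apply U_surj.
Qed.

Lemma U_inj s t : 0 <= s -> 0 <= t -> U s = U t -> s = t.
Proof.
  intros Hs Ht HU. destruct (Rtotal_order s t) as [H|[H|H]]; auto.
  - generalize (U_decr s t Hs H). lra.
  - generalize (U_decr t s Ht H). lra.
Qed.

Lemma tau_U t : 0 <= t -> tau (U t) = t.
Proof.
  intros Ht. assert (Hr : a < U t <= u0) by (split; [apply U_gt_a|apply U_le_u0]; auto).
  destruct (tau_spec _ Hr) as [H1 H2]. now apply U_inj.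
Qed.

Lemma tau_u0 : tau u0 = 0.
Proof. rewrite <- U0. apply tau_U; lra. Qed.

Lemma tau_gt u : u0 < u -> tau u = 0.
Proof. intros H. unfold tau. destruct (Rle_dec u u0); [lra|auto]. Qed.

Lemma tau_nonneg u : a < u -> 0 <= tau u.
Proof.
  intros H. destruct (Rle_dec u u0) as [H'|H'].
  - apply (tau_spec u); lra.
  - rewrite tau_gt; lra.
Qed.

Lemma tau_pos u : a < u < u0 -> 0 < tau u.
Proof.
  intros H. destruct (tau_spec u ltac:(lra)) as [H1 H2].
  destruct (Req_dec (tau u) 0) as [H0|H0]; [|lra].
  rewrite H0, U0 in H2. lra.
Qed.

Lemma tau_lt1 t v : 0 <= t -> a < v <= u0 -> v < U t -> t < tau v.
Proof.
  intros Ht Hv Hlt. destruct (tau_spec v Hv) as [H1 H2].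
  destruct (Rtotal_order t (tau v)) as [H|[H|H]]; auto.
  - rewrite <- H in H2. lra.
  - generalize (U_decr (tau v) t H1 H). lra.
Qed.

Lemma tau_lt2 t v : 0 <= t -> a < v <= u0 -> U t < v -> tau v < t.
Proof.
  intros Ht Hv Hlt. destruct (tau_spec v Hv) as [H1 H2].
  destruct (Rtotal_order t (tau v)) as [H|[H|H]]; auto.
  - generalize (U_decr t (tau v) Ht H). lra.
  - rewrite <- H in H2. lra.
Qed.

Lemma tau_cont x : a < x -> cont_ed tau x.
Proof.
  intros Hx eps He. destruct (Rlt_le_dec x u0) as [Hxu|Hxu].
  - set (t := tau x). assert (Ht : 0 < t) by (apply tau_pos; lra).
    assert (HUt : U t = x) by (apply tau_spec; lra).
    set (e := Rmin eps t / 2).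
    assert (He0 : 0 < e) by (unfold e; apply Rmin_case; lra).
    assert (He1 : e < eps) by (unfold e; generalize (Rmin_l eps t); lra).
    assert (He2 : e < t) by (unfold e; generalize (Rmin_r eps t); lra).
    assert (H1 : x < U (t - e)) by (rewrite <- HUt; apply U_decr; lra).
    assert (H2 : U (t + e) < x) by (rewrite <- HUt; apply U_decr; lra).
    exists (Rmin (U (t - e) - x) (x - U (t + e))). split.
    { apply Rmin_case; lra. }
    intros y Hy. apply Rabs_def2 in Hy. destruct Hy as [Hy1 Hy2].
    generalize (Rmin_l (U (t - e) - x) (x - U (t + e))) (Rmin_r (U (t - e) - x) (x - U (t + e))).
    intros Hm1 Hm2.
    assert (Hya : a < y <= u0).
    { generalize (U_gt_a (t+e) ltac:(lra)) (U_le_u0 (t-e) ltac:(lra)). lra. }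
    generalize (tau_lt1 (t - e) y ltac:(lra) Hya ltac:(lra)) (tau_lt2 (t + e) y ltac:(lra) Hya ltac:(lra)).
    intros. fold t. apply Rabs_def1; lra.
  - assert (Htx : tau x = 0).
    { destruct (Req_dec x u0) as [->|Hn]. apply tau_u0. apply tau_gt; lra. }
    rewrite Htx.
    assert (HUe : U (eps/2) < u0) by (rewrite <- U0; apply U_decr; lra).
    exists (x - U (eps/2)). split; [lra|].
    intros y Hy. apply Rabs_def2 in Hy.
    destruct (Rle_dec y u0) as [Hyu|Hyu].
    + assert (Hya : a < y <= u0) by (generalize (U_gt_a (eps/2) ltac:(lra)); lra).
      generalize (tau_lt2 (eps/2) y ltac:(lra) Hya ltac:(lra)) (tau_nonneg y ltac:(lra)).
      intros. apply Rabs_def1; lra.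
    + rewrite tau_gt by lra. rewrite Rminus_diag, Rabs_R0. lra.
Qed.

Definition psi (u : R) : R := beta * I (tau u).

Lemma psi_pos u : a < u -> 0 < psi u.
Proof.
  intros H. unfold psi. apply Rmult_lt_0_compat; auto. apply Ipos0, tau_nonneg; auto.
Qed.

Lemma I_cont t : 0 < t -> continuity_pt I t.
Proof. intros Ht. apply (deriv_pt _ _ _ (dI t Ht)). Qed.
Lemma E_cont t : 0 < t -> continuity_pt E t.
Proof. intros Ht. apply (deriv_pt _ _ _ (dE t Ht)). Qed.

Lemma psi_cont x : a < x -> continuity_pt psi x.
Proof.
  intros Hx. destruct (Rlt_le_dec x u0) as [Hxu|Hxu].
  - unfold psi. apply (continuity_pt_scal (fun u => I (tau u))).
    apply (continuity_pt_comp tau I). apply cont_ed_pt, tau_cont; auto.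
    apply I_cont, tau_pos; lra.
  - apply cont_ed_pt. intros eps He.
    assert (Htx : tau x = 0).
    { destruct (Req_dec x u0) as [->|Hn]. apply tau_u0. apply tau_gt; lra. }
    assert (He' : 0 < eps / beta) by (apply Rdiv_lt_0_compat; lra).
    destruct (max_rc I cpI _ He') as [d1 [Hd1 Hy1]].
    destruct (tau_cont x Hx d1 Hd1) as [d2 [Hd2 Hy2]].
    exists (Rmin d2 (x - a)). split. apply Rmin_case; lra.
    intros y Hy. generalize (Rmin_l d2 (x - a)) (Rmin_r d2 (x - a)). intros.
    specialize (Hy2 y ltac:(lra)). rewrite Htx in Hy2.
    assert (Hya : a < y) by (apply Rabs_def2 in Hy; lra).
    generalize (tau_nonneg y Hya). intros.
    rewrite Rminus_0_r, Rabs_pos_eq in Hy2 by lra.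
    specialize (Hy1 (tau y) ltac:(lra)).
    unfold psi. rewrite Htx. rewrite <- Rmult_minus_distr_l, Rabs_mult, Rabs_pos_eq by lra.
    apply Rmult_lt_reg_r with (/ beta). apply Rinv_0_lt_compat; lra.
    replace (beta * Rabs (I (tau y) - I 0) * / beta) with (Rabs (I (tau y) - I 0)) by (field; lra).
    exact Hy1.
Qed.

Lemma tau_decr v w : a < v -> v < w -> w <= u0 -> tau w < tau v.
Proof.
  intros H1 H2 H3. destruct (tau_spec v ltac:(lra)) as [Hv1 Hv2].
  apply tau_lt2; auto; lra.
Qed.

Lemma dtau u : a < u < u0 -> is_derive tau u (- 1 / (u * psi u)).
Proof.
  intros Hu.
  set (f := fun s => - U s). set (g := fun y => tau (- y)).
  set (u1 := (u + u0) / 2). set (u2 := (a + u) / 2).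
  assert (Hu1 : a < u1 < u0) by (unfold u1; lra).
  assert (Hu2 : a < u2 < u0) by (unfold u2; lra).
  assert (Hu12 : u2 < u < u1) by (unfold u1, u2; lra).
  assert (Hglb : 0 < g (- u1)) by (unfold g; rewrite Ropp_involutive; apply tau_pos; lra).
  assert (Prf : forall z, g (- u1) <= z <= g (- u2) -> derivable_pt f z).
  { intros z Hz. exists (- (- beta * I z * U z)). apply is_derive_Reals.
    unfold f. apply (is_derive_opp (K:=R_AbsRing) (V:=R_NormedModule)). apply dU; lra. }
  assert (Hgc : continuity_pt g (- u)).
  { unfold g. apply (continuity_pt_comp (fun y => - y) tau).
    apply (continuity_pt_opp (fun y => y)). apply continuity_pt_id.
    rewrite Ropp_involutive. apply cont_ed_pt, tau_cont; lra. }
  assert (Hinc : g (- u1) <= g (- u) <= g (- u2)).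
  { unfold g; rewrite !Ropp_involutive. split; apply Rlt_le, tau_decr; unfold u1, u2 in *; lra. }
  assert (Hid : forall x0, - u1 <= x0 <= - u2 -> comp f g x0 = id x0).
  { intros x0 Hx0. unfold comp, f, g, id.
    rewrite (proj2 (tau_spec (- x0) ltac:(lra))). ring. }
  set (t := tau u).
  assert (Ht : 0 < t) by (apply tau_pos; auto).
  assert (HUt : U t = u) by (apply tau_spec; lra).
  assert (Hdf : derive_pt f (g (- u)) (Prf (g (- u)) Hinc) = beta * I t * u).
  { apply derive_pt_eq_0. unfold g. rewrite Ropp_involutive. fold t.
    apply is_derive_Reals. eapply deriv_val.
    unfold f. apply (is_derive_opp (K:=R_AbsRing) (V:=R_NormedModule)). apply dU; lra.
    rewrite HUt. unfold opp; simpl. ring. }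
  assert (HIt : 0 < I t) by (apply Ipos0; lra).
  assert (Hne : derive_pt f (g (- u)) (Prf (g (- u)) Hinc) <> 0).
  { rewrite Hdf. apply Rgt_not_eq. apply Rmult_lt_0_compat; [apply Rmult_lt_0_compat|]; generalize a_pos; lra. }
  assert (Hl1 : - u1 < - u2) by lra.
  assert (Hl2 : - u1 < - u < - u2) by lra.
  generalize (Ranalysis5.derivable_pt_lim_recip_interv f g (- u1) (- u2) (- u) Prf Hgc
    Hl1 Hl2 Hinc Hid Hne). rewrite Hdf. intros Hl.
  apply is_derive_Reals in Hl.
  apply (is_derive_ext (fun v => g (- v))).
  { intros v. unfold g. now rewrite Ropp_involutive. }
  eapply deriv_val. apply (dcomp g (fun v => - v)). exact Hl.
  apply (is_derive_opp (K:=R_AbsRing) (V:=R_NormedModule) (fun v => v)). apply did.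
  unfold psi. fold t. unfold opp, one; simpl. field. generalize a_pos; intros; repeat split; try apply Rgt_not_eq; try apply Rmult_lt_0_compat; lra.
Qed.

Definition Dform (v : R) : R :=
  beta * (- 1 / (v * psi v) * (delta * E (tau v) - gamma * I (tau v))).

Lemma dpsi u : a < u < u0 -> is_derive psi u (Dform u).
Proof.
  intros Hu. unfold Dform. 
  assert (H : is_derive (fun v => beta * I (tau v)) u
     (beta * (- 1 / (u * psi u) * (delta * E (tau u) - gamma * I (tau u))))).
  { apply dscal. apply dcomp. apply dI. apply tau_pos; auto. apply dtau; auto. }
  exact H.
Qed.

Lemma Derive_psi u : a < u < u0 -> Derive psi u = Dform u.
Proof. intros Hu. apply is_derive_unique, dpsi; auto. Qed.

Lemma Dform_cont u : a < u < u0 -> continuity_pt Dform u.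
Proof.
  intros Hu. generalize a_pos; intros Ha. unfold Dform.
  assert (Hp : 0 < psi u) by (apply psi_pos; lra).
  assert (Htc : continuity_pt tau u) by (apply cont_ed_pt, tau_cont; lra).
  assert (Ht : 0 < tau u) by (apply tau_pos; auto).
  apply (continuity_pt_scal (fun v => - 1 / (v * psi v) * (delta * E (tau v) - gamma * I (tau v)))).
  apply (continuity_pt_mult (fun v => - 1 / (v * psi v)) (fun v => delta * E (tau v) - gamma * I (tau v))).
  - apply (continuity_pt_div (fun _ => -1) (fun v => v * psi v)).
    + apply continuity_pt_const. intros ? ?; reflexivity.
    + apply (continuity_pt_mult (fun v => v) psi). apply continuity_pt_id. apply psi_cont; lra.
    + apply Rgt_not_eq. apply Rmult_lt_0_compat; lra.
  - apply (continuity_pt_minus (fun v => delta * E (tau v)) (fun v => gamma * I (tau v))).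
    + apply (continuity_pt_scal (fun v => E (tau v))).
      apply (continuity_pt_comp tau E); auto. apply E_cont; auto.
    + apply (continuity_pt_scal (fun v => I (tau v))).
      apply (continuity_pt_comp tau I); auto. apply I_cont; auto.
Qed.

Lemma Derive_psi_cont u : a < u < u0 -> continuous (Derive psi) u.
Proof.
  intros Hu. apply (continuous_ext_loc _ Dform).
  - assert (He : 0 < Rmin (u - a) (u0 - u)) by (apply Rmin_case; lra).
    exists (mkposreal _ He). intros y Hy. apply ball_R in Hy. change (Rabs (y - u) < Rmin (u - a) (u0 - u)) in Hy.
    generalize (Rmin_l (u - a) (u0 - u)) (Rmin_r (u - a) (u0 - u)). intros.
    apply Rabs_def2 in Hy. symmetry. apply Derive_psi; lra.
  - apply pt_continuous, Dform_cont; auto.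
Qed.

Lemma abel u : a < u < u0 ->
  Derive psi u * psi u - (gamma + delta) / u * psi u
  = - delta * ((beta * N - beta * K * u + gamma * ln u) / u).
Proof.
  intros Hu. generalize a_pos; intros Ha.
  rewrite Derive_psi by auto. unfold Dform.
  set (t := tau u).
  assert (Ht : 0 < t) by (apply tau_pos; auto).
  assert (HUt : U t = u) by (apply tau_spec; lra).
  assert (HIt : 0 < I t) by (apply Ipos0; lra).
  assert (Hcons := conservation t ltac:(lra)).
  assert (HS := SU t ltac:(lra)). rewrite HUt in HS.
  assert (Hln : ln u = - c * Rc t) by (rewrite <- HUt; unfold U; apply ln_exp).
  unfold psi. fold t. rewrite Hln.
  replace (E t) with (N - S t - I t - Rc t) by lra. rewrite HS.
  unfold c. field. repeat split; lra.
Qed.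

Lemma psi_u0 : psi u0 = beta * I0.
Proof. unfold psi. now rewrite tau_u0, HI0. Qed.

Lemma psi_left : filterlim psi (at_left u0) (locally (psi u0)).
Proof.
  apply (filterlim_filter_le_1 (F := locally u0)).
  apply filter_le_within.
  apply pt_continuous, psi_cont, a_lt_u0.
Qed.

Lemma psi_lim_a : filterlim psi (at_right a) (locally 0).
Proof.
  apply filterlim_locally. intros eps.
  assert (He : 0 < eps / beta) by (apply Rdiv_lt_0_compat; [apply cond_pos|lra]).
  destruct (I_lim _ He) as [T [HT HI]].
  assert (Ha : a < U T) by (apply U_gt_a; lra).
  exists (mkposreal _ (proj2 (Rlt_0_minus _ _) Ha)). intros x Hx Hax.
  apply ball_R in Hx. change (Rabs (x - a) < U T - a) in Hx.
  apply Rabs_def2 in Hx.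
  assert (Hxr : a < x <= u0) by (generalize (U_le_u0 T ltac:(lra)); lra).
  generalize (tau_lt1 T x ltac:(lra) Hxr ltac:(lra)). intros Htx.
  specialize (HI (tau x) ltac:(lra)).
  apply ball_R. rewrite Rminus_0_r.
  generalize (psi_pos x Hax). intros Hp. rewrite Rabs_pos_eq by lra.
  unfold psi. apply Rmult_lt_reg_r with (/ beta). apply Rinv_0_lt_compat; lra.
  replace (beta * I (tau x) * / beta) with (I (tau x)) by (field; lra). exact HI.
Qed.

Definition gint (xi : R) : R := / (xi * psi xi).
Definition hint (xi : R) : R := exp (delta * tau xi).

Lemma gint_cont x : a < x -> continuity_pt gint x.
Proof.
  intros Hx. unfold gint. generalize a_pos; intros Ha.
  apply (continuity_pt_inv (fun xi => xi * psi xi)).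
  apply (continuity_pt_mult (fun xi => xi) psi). apply continuity_pt_id. apply psi_cont; auto.
  apply Rgt_not_eq. apply Rmult_lt_0_compat. lra. apply psi_pos; auto.
Qed.

Lemma hint_cont x : a < x -> continuity_pt hint x.
Proof.
  intros Hx. unfold hint.
  apply (continuity_pt_comp (fun xi => delta * tau xi) exp).
  apply (continuity_pt_scal tau). apply cont_ed_pt, tau_cont; auto.
  apply derivable_continuous_pt, derivable_pt_exp.
Qed.

Lemma Fint_deriv (h : R -> R) x : (forall z, a < z -> continuity_pt h z) -> a < x ->
  is_derive (fun y => RInt h y u0) x (- h x).
Proof.
  intros Hh Hx.
  apply (is_derive_RInt' (V := R_NormedModule) h (fun y => RInt h y u0) x u0).
  - exists (mkposreal _ (proj2 (Rlt_0_minus _ _) Hx)). intros y Hy.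
    apply ball_R in Hy. change (Rabs (y - x) < x - a) in Hy. apply Rabs_def2 in Hy.
    apply (RInt_correct (V := R_CompleteNormedModule)).
    apply (ex_RInt_continuous (V := R_CompleteNormedModule)).
    intros z Hz. apply pt_continuous, Hh.
    generalize (Rmin_l y u0) (Rmin_r y u0) a_lt_u0. intros.
    assert (a < Rmin y u0) by (apply Rmin_case; lra). lra.
  - apply pt_continuous, Hh; auto.
Qed.

Lemma Fint_cont (h : R -> R) : (forall z, a < z -> continuity_pt h z) ->
  continuity_pt (fun x => RInt h (U (Rmax 0 x)) u0) 0.
Proof.
  intros Hh.
  apply (continuity_pt_comp (fun x => U (Rmax 0 x)) (fun y => RInt h y u0)).
  apply cpU.
  apply (deriv_pt _ _ _ (Fint_deriv h _ Hh (U_gt_a _ (Rmax_l 0 0)))).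
Qed.

Lemma phi_eq t : 0 <= t -> RInt gint (U t) u0 = t.
Proof.
  intros Ht.
  assert (H : RInt gint (U t) u0 - t = 0).
  { rewrite (const_lemma (fun t => RInt gint (U t) u0 - t)); auto.
    - rewrite U0, RInt_point. unfold zero; simpl. ring.
    - apply (continuity_pt_minus (fun x => RInt gint (U (Rmax 0 x)) u0) (fun x => Rmax 0 x)).
      apply Fint_cont, gint_cont. apply Rmax_cont.
    - intros s Hs. eapply deriv_val.
      + apply dminus. apply (dcomp (fun y => RInt gint y u0) U).
        apply Fint_deriv. apply gint_cont. apply U_gt_a; lra.
        apply dU; auto. apply did.
      + unfold gint, psi. rewrite tau_U by lra.
        generalize (U_pos s) (Ipos0 s ltac:(lra)). intros. field. split; lra. }
  lra.
Qed.

Lemma phi_tau u : a < u <= u0 -> seir_phi psi u0 u = tau u.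
Proof.
  intros Hu. destruct (tau_spec u Hu) as [H1 H2].
  unfold seir_phi. rewrite <- (phi_eq (tau u) H1). rewrite H2. reflexivity.
Qed.

Lemma E_eq t : 0 <= t -> E t * exp (delta * t) - K * RInt hint (U t) u0 = E0.
Proof.
  intros Ht.
  rewrite (const_lemma (fun t => E t * exp (delta * t) - K * RInt hint (U t) u0)); auto.
  - rewrite U0, RInt_point, HE0. unfold zero; simpl. rewrite Rmult_0_r, exp_0. ring.
  - apply (continuity_pt_minus (fun x => E (Rmax 0 x) * exp (delta * Rmax 0 x))
                               (fun x => K * RInt hint (U (Rmax 0 x)) u0)).
    + apply (continuity_pt_mult (fun x => E (Rmax 0 x)) (fun x => exp (delta * Rmax 0 x))).
      apply cpE.
      apply (continuity_pt_comp (fun x => delta * Rmax 0 x) exp).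
      apply (continuity_pt_scal (fun x => Rmax 0 x)). apply Rmax_cont.
      apply derivable_continuous_pt, derivable_pt_exp.
    + apply (continuity_pt_scal (fun x => RInt hint (U (Rmax 0 x)) u0)).
      apply Fint_cont, hint_cont.
  - intros s Hs. eapply deriv_val.
    + apply dminus. apply dmult. apply dE; auto. apply dexp, dscal, did.
      apply dscal. apply (dcomp (fun y => RInt hint y u0) U).
      apply Fint_deriv. apply hint_cont. apply U_gt_a; lra.
      apply dU; auto.
    + unfold hint. rewrite tau_U by lra. rewrite (SU s) by lra. ring.
Qed.

Lemma main_seir :
  exists Rinf : R,
    is_lim Rc p_infty Rinf /\
    let N := S0 + E0 + I0 + R0 in
    let a := exp (- (beta / gamma) * Rinf) in
    let u0 := exp (- (beta / gamma) * R0) in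
    let K := S0 * exp ((beta / gamma) * R0) in
    exists psi : R -> R,
      (forall u, a < u <= u0 -> 0 < psi u) /\
      (forall u, a < u < u0 -> continuous psi u) /\
      filterlim psi (at_left u0) (locally (psi u0)) /\
      (forall u, a < u < u0 -> ex_derive psi u /\ continuous (Derive psi) u) /\
      (forall u, a < u < u0 ->
         Derive psi u * psi u - (gamma + delta) / u * psi u
         = - delta * ((beta * N - beta * K * u + gamma * ln u) / u)) /\
      psi u0 = beta * I0 /\
      filterlim psi (at_right a) (locally 0) /\
      (forall u, a < u <= u0 ->
         let t := seir_phi psi u0 u in
         let J := RInt (fun v => exp (delta * seir_phi psi u0 v)) u u0 in
         S t = K * u /\
         E t = E0 * exp (- delta * t) + K * exp (- delta * t) * J /\
         I t = N - K * u + (gamma / beta) * ln u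
               - E0 * exp (- delta * t) - K * exp (- delta * t) * J /\
         Rc t = - (gamma / beta) * ln u).
Proof.
  exists Rinf. split; [apply R_lim|].
  intros N' a' u0' K'. exists psi.
  change N' with N. change a' with a. change u0' with u0. change K' with K.
  split; [|split; [|split; [|split; [|split; [|split; [|split]]]]]].
  - intros u Hu. apply psi_pos; lra.
  - intros u Hu. apply pt_continuous, psi_cont; lra.
  - apply psi_left.
  - intros u Hu. split. exists (Dform u). apply dpsi; auto. apply Derive_psi_cont; auto.
  - apply abel.
  - apply psi_u0.
  - apply psi_lim_a.
  - intros u Hu t J.
    assert (Ht : t = tau u) by (apply phi_tau; auto).
    destruct (tau_spec u Hu) as [Ht0 HUt].
    rewrite <- Ht in Ht0, HUt.
    assert (HJ : J = RInt hint u u0).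
    { unfold J. apply RInt_ext. intros x Hx.
      rewrite Rmin_left, Rmax_right in Hx by lra.
      unfold hint. rewrite phi_tau by lra. reflexivity. }
    assert (HE := E_eq t Ht0). rewrite HUt, <- HJ in HE.
    assert (Hln : ln u = - c * Rc t) by (rewrite <- HUt; unfold U; apply ln_exp).
    assert (HS := SU t Ht0). rewrite HUt in HS.
    assert (Hc := conservation t Ht0).
    assert (Hexp : exp (- delta * t) * exp (delta * t) = 1).
    { rewrite <- exp_plus. replace (- delta * t + delta * t) with 0 by ring. apply exp_0. }
    assert (HEt : E t = E0 * exp (- delta * t) + K * exp (- delta * t) * J).
    { assert (HE' : E t * exp (delta * t) = E0 + K * J) by lra.
      replace (E t) with (E t * exp (delta * t) * exp (- delta * t))
        by (rewrite Rmult_assoc, (Rmult_comm (exp (delta * t))), Hexp; ring).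
      rewrite HE'. ring. }
    assert (HR : Rc t = - (gamma / beta) * ln u) by (rewrite Hln; unfold c; field; lra).
    split; [exact HS|]. split; [exact HEt|]. split; [|exact HR].
    rewrite HR in Hc. lra.
Qed.

End SEIR.

Theorem theorem1
  (beta gamma delta S0 E0 I0 R0 : R)
  (S E I Rc : R -> R)
  (Hbeta : 0 < beta) (Hgamma : 0 < gamma) (Hdelta : 0 < delta)
  (HN : 0 < S0 + E0 + I0 + R0)
  (A1 : 0 < I0)
  (A2 : E0 > (gamma / delta) * I0)
  (A3 : S0 > delta * E0 / (beta * I0))
  (A4 : 0 <= R0 /\ S0 + E0 + I0 + R0 > S0 * exp ((beta / gamma) * R0) + R0)
  (Hsol : SEIR_solution beta gamma delta S0 E0 I0 R0 S E I Rc)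
  (Hpos : forall t, 0 < t -> 0 < S t /\ 0 < E t /\ 0 < I t) :
  exists Rinf : R,
    is_lim Rc p_infty Rinf /\
    let N := S0 + E0 + I0 + R0 in
    let a := exp (- (beta / gamma) * Rinf) in
    let u0 := exp (- (beta / gamma) * R0) in
    let K := S0 * exp ((beta / gamma) * R0) in
    exists psi : R -> R,
      (* psi continuous and positive on (a, u0] *)
      (forall u, a < u <= u0 -> 0 < psi u) /\
      (forall u, a < u < u0 -> continuous psi u) /\
      filterlim psi (at_left u0) (locally (psi u0)) /\
      (* psi is C^1 on (a, u0) *)
      (forall u, a < u < u0 -> ex_derive psi u /\ continuous (Derive psi) u) /\
      (* Abel differential equation of the second kind *)
      (forall u, a < u < u0 ->
         Derive psi u * psi u - (gamma + delta) / u * psi u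
         = - delta * ((beta * N - beta * K * u + gamma * ln u) / u)) /\
      psi u0 = beta * I0 /\
      filterlim psi (at_right a) (locally 0) /\
      (* parametric representation *)
      (forall u, a < u <= u0 ->
         let t := seir_phi psi u0 u in
         let J := RInt (fun v => exp (delta * seir_phi psi u0 v)) u u0 in
         S t = K * u /\
         E t = E0 * exp (- delta * t) + K * exp (- delta * t) * J /\
         I t = N - K * u + (gamma / beta) * ln u
               - E0 * exp (- delta * t) - K * exp (- delta * t) * J /\
         Rc t = - (gamma / beta) * ln u).
Proof.
  destruct Hsol as (HS0 & HE0 & HI0 & HR0 & cS & cE & cI & cR & dS & dE & dI & dR & _).
  exact (main_seir beta gamma delta S0 E0 I0 R0 S E I Rc Hbeta Hgamma Hdelta A1 HS0 HE0 HI0 HR0 cS cE cI cR dS dE dI dR Hpos).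
Qed.
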